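(* Let $G=(V,E)$ be a finite graph and let $U$ be a random subset of $V$ obtained by including each vertex of $V$ independently with probability $1/2$. Then for any pair of distinct vertices $x,y\in V$, \[\mathbb{P}\big(\deg_{U}(x)=\deg_{U}(y)\big)<\frac{20}{\sqrt{\delta(x,y)+1}}.\]
   Context: All graphs are finite and simple. For a vertex $x$, $\Gamma(x)$ denotes its neighbourhood, and for $U\subset V$, $\deg_U(x)=|\Gamma(x)\cap U|$ (defined for every $x\in V$, whether or not $x\in U$). The neighbourhood-distance between two vertices $x,y$ is $\delta(x,y)=|(\Gamma(x)\setminus \{y\})\,\triangle\, (\Gamma(y)\setminus\{x\})|$, where $\triangle$ is symmetric difference. *)

(* Defs.v *)
From HB Require Import structures.
From mathcomp Require Import all_boot all_order all_algebra.
Set Implicit Arguments. Unset Strict Implicit. Unset Printing Implicit Defensive.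
Import Order.TTheory GRing.Theory Num.Theory.

(* A finite simple graph: vertex type T : finType, adjacency e : rel T,
   assumed symmetric and irreflexive in the theorem. *)
Section Defs.
Variables (T : finType) (e : rel T).

Definition nbhd (x : T) : {set T} := [set y | e x y].

Definition degU (U : {set T}) (x : T) : nat := #|nbhd x :&: U|.

Definition ndist (x y : T) : nat :=
  let A := nbhd x :\ y in
  let B := nbhd y :\ x in
  #|(A :\: B) :|: (B :\: A)|.

(* Probability of event P when U is a random subset of T containing each
   vertex independently with probability 1/2, i.e. U uniform on {set T}. *)
Definition prob_half (R : fieldType) (P : pred {set T}) : R :=
  (#|[set U : {set T} | P U]|%:R / (2%:R ^+ #|T|))%R.
End Defs.

(* Main.v *)
Require Import Defs.
From HB Require Import structures.
From mathcomp Require Import all_boot all_order all_algebra.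
From mathcomp Require Import zify.
Set Implicit Arguments. Unset Strict Implicit. Unset Printing Implicit Defensive.

Lemma bin_mid m : 'C(m.*2.+1, m) = 'C(m.*2.+1, m.+1).
Proof.
rewrite -bin_sub; last lia.
f_equal; lia.
Qed.

Lemma odd_of_even m : ('C(m.*2, m) ^ 2 * m.*2.+1 <= 4 ^ m.*2)%N ->
  ('C(m.*2.+1, m.+1) ^ 2 * m.*2.+2 <= 4 ^ m.*2.+1)%N.
Proof.
move=> IH1.
set c := 'C(m.*2, m) in IH1 *.
have hb : ('C(m.*2.+1, m.+1) * m.+1 = m.*2.+1 * c)%N.
  by rewrite mulnC -mul_bin_diag.
set b := 'C(m.*2.+1, m.+1) in hb *.
have H : (b ^ 2 * m.*2.+2 * m.+1 ^ 2 <= 4 ^ m.*2.+1 * m.+1 ^ 2)%N.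
  have -> : (b ^ 2 * m.*2.+2 * m.+1 ^ 2 = (b * m.+1) ^ 2 * m.*2.+2)%N by lia.
  rewrite hb.
  have -> : ((m.*2.+1 * c) ^ 2 * m.*2.+2 = (c ^ 2 * m.*2.+1) * (m.*2.+1 * m.*2.+2))%N by lia.
  have -> : (4 ^ m.*2.+1 * m.+1 ^ 2 = 4 ^ m.*2 * (4 * m.+1 ^ 2))%N by rewrite expnS; lia.
  apply: leq_mul => //; lia.
by rewrite leq_pmul2r ?expn_gt0 in H.
Qed.

Lemma even_bound m : ('C(m.*2, m) ^ 2 * m.*2.+1 <= 4 ^ m.*2)%N.
Proof.
elim: m => [|m IH1]; first by [].
set c := 'C(m.*2, m) in IH1 *.
have hb : ('C(m.*2.+1, m.+1) * m.+1 = m.*2.+1 * c)%N.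
  by rewrite mulnC -mul_bin_diag.
have hs := bin_mid m.
set b := 'C(m.*2.+1, m.+1) in hb hs.
have -> : (m.+1).*2 = (m.*2.+1).+1 by lia.
rewrite binS hs.
have H2 : ((b + b) ^ 2 * (m.*2.+1).+2 * m.+1 ^ 2 <= 4 ^ (m.*2.+1).+1 * m.+1 ^2)%N.
  have -> : ((b + b) ^ 2 * (m.*2.+1).+2 * m.+1 ^ 2 = 4 * (b * m.+1) ^ 2 * m.*2.+3)%N by lia.
  rewrite hb.
  have -> : (4 * (m.*2.+1 * c) ^ 2 * m.*2.+3 = (c ^ 2 * m.*2.+1) * (4 * (m.*2.+1 * m.*2.+3)))%N by lia.
  have -> : (4 ^ (m.*2.+1).+1 * m.+1 ^ 2 = 4 ^ m.*2 * (16 * m.+1 ^ 2))%N.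
    rewrite !expnS; lia.
  apply: leq_mul => //; lia.
by rewrite leq_pmul2r ?expn_gt0 in H2.
Qed.

Lemma half_bound n : ('C(n, n./2) ^ 2 * n.+1 <= 4 ^ n)%N.
Proof.
case/boolP: (odd n) => hn.
  have -> : n = (n./2).*2.+1 by rewrite -[LHS]odd_double_half hn.
  set m := n./2.
  have -> : (m.*2.+1)./2 = m by rewrite -[X in _ = X](half_bit_double m true).
  rewrite bin_mid; exact: odd_of_even (even_bound m).
have -> : n = (n./2).*2 by rewrite -[LHS]odd_double_half (negbTE hn).
by rewrite doubleK; exact: even_bound.
Qed.

Lemma bin_step {n i} : (i.+1 <= n./2)%N -> ('C(n, i) <= 'C(n, i.+1))%N.
Proof.
move=> hi; have h := mul_bin_left n i.
have hle : (i.+1 <= n - i)%N.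
  have := odd_double_half n; lia.
have : (i.+1 * 'C(n, i) <= i.+1 * 'C(n, i.+1))%N.
  rewrite h; exact: leq_mul.
by rewrite leq_mul2l.
Qed.

Lemma bin_le_half n k : ('C(n, k) <= 'C(n, n./2))%N.
Proof.
have up : forall i, (i <= n./2)%N -> forall j, (j <= i)%N -> ('C(n, j) <= 'C(n, i))%N.
  elim=> [|i IH] hi j hj; first by move: hj; rewrite leqn0 => /eqP->.
  case: (ltngtP j i.+1) hj => // [hji _|-> _ //].
  rewrite ltnS in hji; exact: leq_trans (IH (ltnW hi) j hji) (bin_step hi).
case: (leqP k n./2) => hk; first exact: up.
case: (leqP k n) => hkn; last by rewrite bin_small.
rewrite -bin_sub //; apply: up => //.
have := odd_double_half n; lia.
Qed.

Lemma card_sumb (T : finType) (A : {set T}) : #|A| = \sum_(z : T) (z \in A : nat).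
Proof.
rewrite -sum1_card big_mkcond /=; apply: eq_bigr => z _; by case: (z \in A).
Qed.

Lemma count_slice (T : finType) (S : {set T}) k :
  #|[set W : {set T} | #|W :&: S| == k]| = 'C(#|S|, k) * 2 ^ (#|T| - #|S|).
Proof.
pose g (W : {set T}) := (W :&: S, W :\: S).
have ginj : injective g.
  move=> W1 W2 [h1 h2]; by rewrite -(setID W1 S) -(setID W2 S) h1 h2.
rewrite -(card_imset _ ginj).
have -> : g @: [set W : {set T} | #|W :&: S| == k] =
   setX [set P : {set T} | P \subset S & #|P| == k] (powerset (~: S)).
  apply/setP => [[P Q]]; rewrite !inE /=; apply/imsetP/idP.
    move=> [W]; rewrite inE => hW [-> ->]; rewrite subsetIr hW /=.
    by apply/subsetP => z; rewrite !inE => /andP[].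
  move=> /andP[/andP[hP hk] hQ]; exists (P :|: Q).
    rewrite inE.
    have -> : (P :|: Q) :&: S = P.
      apply/setP => z; rewrite !inE; case hz: (z \in P) => /=.
        by rewrite (subsetP hP).
      case hq: (z \in Q) => //=. by move: (subsetP hQ z hq); rewrite !inE => /negbTE->.
    by [].
  rewrite /g; congr pair; apply/setP => z; rewrite !inE.
    case hz: (z \in P) => /=; first by rewrite (subsetP hP).
    case hq: (z \in Q) => //=. by move: (subsetP hQ z hq); rewrite !inE => /negbTE->.
  case hz: (z \in S) => /=.
    case hq: (z \in Q) => /=; last by case: (z \in P). by move: (subsetP hQ z hq); rewrite !inE hz.
  case hq: (z \in Q); case hp: (z \in P) => //=; by move: (subsetP hP z hp); rewrite hz.
by rewrite cardsX cards_draws card_powerset [#|~: S|]cardsCs setCK.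
Qed.

Lemma card_invol (T : finType) (f : {set T} -> {set T}) (P : pred {set T}) :
  cancel f f -> #|[set U | P (f U)]| = #|[set W | P W]|.
Proof.
move=> fK.
have -> : [set U | P (f U)] = f @: [set W | P W].
  by rewrite (can_imset_pre _ fK); apply/setP => U; rewrite !inE.
exact: card_imset (can_inj fK).
Qed.

Section Graph.
Variables (T : finType) (e : rel T).
Hypotheses (e_sym : symmetric e) (e_irr : irreflexive e).
Variables (x y : T).
Hypothesis hxy : x != y.

Let A := nbhd e x :\: nbhd e y :\ y.
Let B := nbhd e y :\: nbhd e x :\ x.
Let Xs := if e x y then [set x; y] else set0.
Let Dx := if e x y then [set x] else set0.
Let S := A :|: B :|: Xs.
Let D := B :|: Dx.
Definition flip (U : {set T}) := (U :\: D) :|: (D :\: U).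

Lemma flipK : cancel flip flip.
Proof.
move=> U; rewrite /flip; move: (D) => D0.
apply/setP => z; rewrite !inE.
by case: (z \in U); case: (z \in D0).
Qed.

Lemma cardDx : #|Dx| = e x y.
Proof. by rewrite /Dx; case: (e x y); rewrite ?cards1 ?cards0. Qed.

Lemma key U : degU e U y + #|flip U :&: S| = degU e U x + #|B| + #|Dx|.
Proof.
rewrite /degU !card_sumb -!big_split /=; apply: eq_bigr => z _.
rewrite /flip /S /D /A /B /Xs /Dx /nbhd.
have eyx : e y x = e x y by rewrite e_sym.
case exy: (e x y) eyx => eyx; rewrite !inE;
(case: (eqVneq z x) => [->|zx]; [rewrite ?e_irr ?eyx ?exy ?eqxx ?(negbTE hxy) /=; by case: (x \in U)|]);
(case: (eqVneq z y) => [->|zy]; [rewrite ?e_irr ?exy ?eqxx ?(eq_sym y x) ?(negbTE hxy) /=; by case: (y \in U)|]);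
rewrite ?(negbTE zx) ?(negbTE zy) /=;
by case: (e x z); case: (e y z); case: (z \in U).
Qed.

Lemma ndist_le : ndist e x y <= #|S|.
Proof.
apply: subset_leq_card; apply/subsetP => z.
rewrite /S /A /B /Xs /nbhd !inE.
case: (eqVneq z x) => [->|zx]; first by rewrite e_irr /= !andbF.
case: (eqVneq z y) => [->|zy]; first by rewrite e_irr /= !andbF.
by case: (e x z); case: (e y z); case: (e x y).
Qed.

Lemma count_eq :
  #|[set U : {set T} | degU e U x == degU e U y]| =
  'C(#|S|, #|B| + e x y) * 2 ^ (#|T| - #|S|).
Proof.
rewrite -count_slice -(card_invol (fun W => #|W :&: S| == #|B| + e x y) flipK).
apply: eq_card => U; rewrite !inE.
have := key U; rewrite cardDx; move: (degU e U x) (degU e U y) (#|flip U :&: S|) => a b c.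
move=> h; apply/eqP/eqP; lia.
Qed.

Lemma count_bound :
  (#|[set U : {set T} | degU e U x == degU e U y]| ^ 2 * (ndist e x y).+1
    <= (2 ^ #|T|) ^ 2)%N.
Proof.
rewrite count_eq.
set n := #|S|; set k := (#|B| + e x y)%N.
have hn : (n <= #|T|)%N by exact: max_card.
have hd := ndist_le.
have E : ((2 ^ #|T|) ^ 2 = 4 ^ n * 4 ^ (#|T| - n))%N.
  by rewrite -expnD subnKC // -expnM mulnC expnM.
have E2 : (('C(n, k) * 2 ^ (#|T| - n)) ^ 2 = 'C(n, k) ^ 2 * 4 ^ (#|T| - n))%N.
  have F : forall m, ((2 ^ m) ^ 2 = 4 ^ m)%N by move=> m; rewrite -expnM mulnC expnM.
  by rewrite expnMn F.
rewrite E E2 mulnAC; apply: leq_mul => //.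
have h1 := half_bound n; have h2 := bin_le_half n k.
apply: leq_trans h1; apply: leq_mul; last by [].
by rewrite leq_exp2r.
Qed.

End Graph.

From mathcomp Require Import ring lra.
Import Order.TTheory GRing.Theory Num.Theory.
Local Open Scope ring_scope.

Lemma final_real (R : rcfType) (c q s : R) : 0 < q -> 0 < s -> 0 <= c ->
  c ^+ 2 * s ^+ 2 <= q ^+ 2 -> c / q * s < 20%:R.
Proof.
move=> hq hs hc hb.
set p := c / q.
have hp : p * q = c by rewrite /p mulfVK // gt_eqF.
have hp0 : 0 <= p by rewrite /p divr_ge0 // ltW.
have h1 : (p * s) ^+ 2 * q ^+ 2 <= q ^+ 2.
  have -> : (p * s) ^+ 2 * q ^+ 2 = (p * q) ^+ 2 * s ^+ 2 by ring.
  by rewrite hp.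
have h2 : (p * s) ^+ 2 <= 1.
  by rewrite -(ler_pM2r (exprn_gt0 2 hq)) mul1r.
have h3 : 0 <= p * s by rewrite mulr_ge0 // ltW.
nra.
Qed.

Theorem lemma3p1 (R : rcfType) (T : finType) (e : rel T)
  (e_sym : symmetric e) (e_irr : irreflexive e) (x y : T) (hxy : x != y) :
  prob_half R (fun U => degU e U x == degU e U y)
    < 20%:R / Num.sqrt ((ndist e x y).+1)%:R.
Proof.
have hb := count_bound e_sym e_irr hxy.
rewrite /prob_half.
move: hb; set c := #|_|; set d := ndist e x y; set N := #|T| => hb.
have hq : (0 : R) < 2%:R ^+ N by rewrite exprn_gt0 // ltr0n.
have hs : (0 : R) < Num.sqrt (d.+1)%:R by rewrite sqrtr_gt0 ltr0n.
have hs2 : Num.sqrt (d.+1)%:R ^+ 2 = (d.+1)%:R :> R by rewrite sqr_sqrtr // ler0n.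
rewrite ltr_pdivlMr //; apply: final_real => //.
by rewrite hs2 -!natrX -natrM ler_nat.
Qed.
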